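(* Let $G$ be the bipartite graph with left vertices $u_1,u_2,u_3$, right vertices $w_1,w_2$, and edges $u_1w_1,\ u_1w_2,\ u_2w_1,\ u_3w_1,\ u_3w_2$ (and no others). Then there exist $n,k\in\mathbb{N}$ with $k\le n$ such that for every 2-coloring of the edges of $B_{n,k}$, there exists an induced monochromatic copy of $G$ in $B_{n,k}$; that is, there is a set $V'$ of vertices of $B_{n,k}$ such that the induced subgraph of $B_{n,k}$ on $V'$ is isomorphic to $G$ and all of its edges receive the same color.
   Context: For $n\in\mathbb{N}$, $[n]=\{1,\dots,n\}$, and for a set $X$, $\binom{X}{k}$ denotes the set of $k$-element subsets of $X$. For $k\le n$, $B_{n,k}$ is the bipartite graph with left vertex set $[n]$, right vertex set $\binom{[n]}{k}$, and edge set $\{(x,X)\in[n]\times\binom{[n]}{k} : x\in X\}$. For a graph $H=(V,E)$ and $V'\subseteq V$, the induced subgraph on $V'$ has vertex set $V'$ and edge set consisting of all edges of $H$ with both endpoints in $V'$. A 2-coloring of the edges is a map from the edge set to a 2-element set of colors. *)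

(* Defs.v *)
From mathcomp Require Import all_boot.
Set Implicit Arguments. Unset Strict Implicit. Unset Printing Implicit Defensive.

Definition kset (n k : nat) := {X : {set 'I_n} | #|X| == k}.

(* Vertex set of B_{n,k}: left part [n] (inl), right part binom([n],k) (inr). *)
Definition Bvert (n k : nat) := ('I_n + kset n k)%type.

Definition Badj (n k : nat) (u v : Bvert n k) : bool :=
  match u, v with
  | inl x, inr X => x \in val X
  | inr X, inl x => x \in val X
  | _, _ => false
  end.

Definition Bedge (n k : nat) := {e : 'I_n * kset n k | e.1 \in val e.2}.

(* The graph G: left vertices u1,u2,u3 ('I_3), right vertices w1,w2 ('I_2),
   edges u1w1, u1w2, u2w1, u3w1, u3w2 (0-based indices). *)
Definition Gvert := ('I_3 + 'I_2)%type.

Definition Gedge (i : 'I_3) (j : 'I_2) : bool :=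
  ((val i == 0) && (val j == 0)) || ((val i == 0) && (val j == 1)) ||
  ((val i == 1) && (val j == 0)) ||
  ((val i == 2) && (val j == 0)) || ((val i == 2) && (val j == 1)).

Definition Gadj (a b : Gvert) : bool :=
  match a, b with
  | inl i, inr j => Gedge i j
  | inr j, inl i => Gedge i j
  | _, _ => false
  end.

Definition induced_copy_of_G (n k : nat) (V' : {set Bvert n k}) : Prop :=
  exists f : Gvert -> Bvert n k,
    [/\ injective f,
        (forall v, v \in V' <-> exists a, f a = v) &
        (forall a b, Badj (f a) (f b) = Gadj a b)].

Definition monochromatic (n k : nat) (c : Bedge n k -> bool)
  (V' : {set Bvert n k}) : Prop :=
  exists b : bool, forall e : Bedge n k,
    inl (val e).1 \in V' -> inr (val e).2 \in V' -> c e = b.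

(* Main.v *)
Require Import Defs.
From mathcomp Require Import all_boot.
From mathcomp Require Import zify.
Set Implicit Arguments. Unset Strict Implicit. Unset Printing Implicit Defensive.

Definition pat (T : finType) (M : T -> T -> bool) :=
  exists b i j u v, [&& i != j, i != u, i != v, j != u, j != v & u != v] /\
    [/\ M i j = b, M i u = b, M i v = b, M j u = b & M j v = b].

Lemma notb_eq (x b : bool) : (x != b) = (x == ~~ b).
Proof. by case: x; case: b. Qed.

Lemma core (T : finType) (M : T -> T -> bool) i b (N : {set T}) :
  6 <= #|N| -> i \notin N -> (forall x, x \in N -> M i x = b) -> pat M.
Proof.
move=> HN iN Hi.
set P := fun j (b : bool) => [set x | M j x == b].
case: (boolP [exists j in N, 1 < #|(N :\ j) :&: P j b|]).
  case/existsP=> j /andP[jN /card_gt1P [u [v [Hu Hv uv]]]].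
  move: Hu Hv; rewrite !inE => /andP[/andP[uj uN] /eqP Mu] /andP[/andP[vj vN] /eqP Mv].
  exists b, i, j, u, v; split; last by split; rewrite ?Hi.
  have ne : forall x, x \in N -> i != x by move=> x xN; apply/eqP=> E; rewrite E xN in iN.
  by do !(apply/andP; split); rewrite ?ne // eq_sym.
rewrite negb_exists => /forallP Hall.
have Hle : forall j, j \in N -> #|(N :\ j) :&: P j b| <= 1.
  move=> j jN; move: (Hall j); by rewrite jN /= -leqNgt.
have /card_gt0P [j jN] : 0 < #|N| by lia.
set N' := (N :\ j) :\: P j b.
have HN' : 4 <= #|N'|.
  have := cardsID (P j b) (N :\ j); have := cardsD1 j N; rewrite jN.
  have := Hle j jN; rewrite -/N'; lia.
have /card_gt0P [j' j'N'] : 0 < #|N'| by lia.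
have j'N : j' \in N by move: j'N'; rewrite !inE => /andP[_ /andP[]].
set S := (N' :\ j') :\: P j' b.
have HS : 1 < #|S|.
  have := cardsID (P j' b) (N' :\ j'); have := cardsD1 j' N'; rewrite j'N'.
  have : #|(N' :\ j') :&: P j' b| <= 1.
    apply: leq_trans (Hle j' j'N); apply: subset_leq_card.
    apply/subsetP=> x; rewrite !inE => /andP[/and4P[-> _ _ ->] ->].
    done.
  rewrite -/S; lia.
case/card_gt1P: HS => u [v [Hu Hv uv]].
move: Hu Hv j'N'; rewrite !inE !notb_eq.
move=> /and5P[/eqP Mj'u uj' /eqP Mju uj _].
move=> /and5P[/eqP Mj'v vj' /eqP Mjv vj _].
move=> /and3P[/eqP Mjj' j'j _].
exists (~~ b), j, j', u, v; split; last by split.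
by do !(apply/andP; split); rewrite // eq_sym.
Qed.

Lemma pattern (T : finType) (M : T -> T -> bool) : 12 <= #|T| -> pat M.
Proof.
move=> HT.
have /card_gt0P [i _] : 0 < #|T| by lia.
set U := [set~ i].
have HU : #|U| = #|T|.-1 by rewrite cardsC1.
have := cardsID [set x | M i x] U; rewrite HU => Hs.
case: (leqP 6 #|U :&: [set x | M i x]|) => H.
  apply: (core (i:=i) (b:=true) H); first by rewrite !inE eqxx.
  by move=> x; rewrite !inE => /andP[_ ->].
apply: (core (i:=i) (b:=false) (N := U :\: [set x | M i x])); first lia.
  by rewrite !inE eqxx andbF.
by move=> x; rewrite !inE => /andP[/negbTE -> _].
Qed.

Lemma cardC1_11 (i : 'I_12) : #|[set~ i]| == 11.
Proof. by rewrite cardsC1 card_ord. Qed.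

Definition Xs (i : 'I_12) : kset 12 11 := exist _ [set~ i] (cardC1_11 i).

Definition Mc (c : Bedge 12 11 -> bool) (i x : 'I_12) : bool :=
  if @insub _ _ (Bedge 12 11) (x, Xs i) is Some e then c e else false.

Lemma McE (c : Bedge 12 11 -> bool) (e : Bedge 12 11) i x :
  val e = (x, Xs i) -> c e = Mc c i x.
Proof.
case: e => [[x0 X0] p] /= [E1 E2]; subst.
rewrite /Mc insubT /=; congr (c _); exact: val_inj.
Qed.

Lemma McE' (c : Bedge 12 11 -> bool) x i (p : x \in val (Xs i)) :
  c (@exist _ (fun e : 'I_12 * kset 12 11 => e.1 \in sval e.2) (x, Xs i) p) = Mc c i x.
Proof. exact: McE. Qed.

Lemma Xs_inj (i j : 'I_12) : Xs i = Xs j -> i = j.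
Proof.
move=> /(congr1 val) /= E.
by apply/set1_inj/setC_inj.
Qed.

Definition fG (i j u v : 'I_12) (a : Gvert) : Bvert 12 11 :=
  match a with
  | inl a => if val a == 0 then inl u else if val a == 1 then inl j else inl v
  | inr a => if val a == 0 then inr (Xs i) else inr (Xs j)
  end.

Theorem mainTheorem4 :
  exists n k : nat, k <= n /\
    forall c : Bedge n k -> bool,
      exists V' : {set Bvert n k}, induced_copy_of_G V' /\ monochromatic c V'.
Proof.
exists 12, 11; split => // c.
have [b [i [j [u [v [/and5P [ij iu iv ju /andP[jv uv]] [Mij Miu Miv Mju Mjv]]]]]]] :=
  pattern (Mc c) (eq_ind_r (fun x => 12 <= x) (leqnn 12) (card_ord 12)).
exists [set fG i j u v a | a : Gvert]; split.
  exists (fG i j u v); split.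
  - have ne : forall x y : 'I_12, x != y -> x = y -> False by move=> x y /eqP.
    case=> [[[|[|[|?]]] ?]|[[|[|?]] ?]] [[[|[|[|?]]] ?]|[[|[|?]] ?]] //= E;
      try (by congr (_ _); apply: val_inj);
      try (case: E => E; exfalso; (apply: ne E; rewrite // eq_sym //) || (apply: ne (Xs_inj E); done)).
    1,2: by exfalso; move: E => /(congr1 (fun w : Bvert 12 11 => if w is inr X then val X else set0)) /= /setC_inj /set1_inj E'; move: ij; rewrite E' eqxx.
  - move=> w; split; first by case/imsetP => a _ ->; exists a.
    by case=> a <-; apply: imset_f.
  - have ji : j != i by rewrite eq_sym.
    have ui : u != i by rewrite eq_sym.
    have vi : v != i by rewrite eq_sym.
    have uj : u != j by rewrite eq_sym.
    have vj : v != j by rewrite eq_sym.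
    case=> [[[|[|[|?]]] ?]|[[|[|?]] ?]] [[[|[|[|?]]] ?]|[[|[|?]] ?]] //=;
    by rewrite !inE /Gedge /= ?eqxx ?ij ?iu ?iv ?ju ?jv ?ji ?ui ?vi ?uj ?vj.
exists b => -[[x X] p] /imsetP [a _ Ha] /imsetP [a' _ Ha'].
move: p Ha Ha' => /= p.
case: a => [[[|[|[|?]]] ?]|[[|[|?]] ?]] //= [E1]; subst x;
case: a' => [[[|[|[|?]]] ?]|[[|[|?]] ?]] //= [E2]; subst X;
  first [ by rewrite McE'
        | by have := p; rewrite /= !inE eqxx ].
Qed.
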